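(* Let $F(\vec{\mathbf p},\mathbf q)$ be a disjunctive template, $y$ a basic variable, $\varphi(y)$ a Henkin formula, and $\vec\varphi$ a sequence of Henkin formulas none of which contains a free occurrence of $y$. For each $\psi\in[\![F(\vec\varphi,\varphi(y))]\!]$ there is $\theta\in[\![F(\vec\varphi,\forall y\varphi(y))]\!]$ such that $\vdash\forall y\psi\to\theta$.
   Context: Syntax of FOLPb: terms $t::=p_i\mid c\mid t\cdot t\mid t+t\mid !t\mid\mathsf b(t)\mid\mathsf{gen}_x(t)$; formulas $Px_1\dots x_n\mid\bot\mid\varphi\to\varphi\mid\forall x\varphi\mid t{:}_X\varphi$ ($X$ finite set of individual variables, $fv(t{:}_X\psi)=X$); $Xy=X\cup\{y\}$, $y\notin X$. Axioms: A1 classical first-order; A2 $t{:}_{Xy}\varphi\to t{:}_X\varphi$ ($y$ not free in $\varphi$); A3 $t{:}_X\varphi\to t{:}_{Xy}\varphi$; B1 $t{:}_X\varphi\to\varphi$; B2 $t{:}_X(\varphi\to\psi)\to(s{:}_X\varphi\to[t\cdot s]{:}_X\psi)$; B3 $t{:}_X\varphi\to[t+s]{:}_X\varphi$, $s{:}_X\varphi\to[t+s]{:}_X\varphi$; B4 $t{:}_X\varphi\to!t{:}_Xt{:}_X\varphi$; B5 $t{:}_X\varphi\to\mathsf{gen}_x(t){:}_X\forall x\varphi$ ($x\notin X$); Bb $\forall y\,t{:}_{Xy}\varphi(y)\to\mathsf b(t){:}_X\forall y\varphi(y)$; rules MP and generalization. Henkin language: $\mathbf V$ countable set of witness variables that may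 occur free (including in subscripts) but are never quantified nor $\mathsf{gen}$ subscripts; the original variables are basic variables; Henkin formulas $\mathit{Fml}_J(\mathbf V)$. Standing assumption: $\mathcal{CS}$ is a fixed variant closed and axiomatically appropriate constant specification for the basic language; $\mathcal{CS}(\mathbf V)$ is the set of all $c{:}\psi$ with $c{:}\varphi\in\mathcal{CS}$ and $\psi$ obtained by replacing some free basic variables of $\varphi$ with distinct witness variables; $\vdash$ denotes provability over $\mathit{Fml}_J(\mathbf V)$ with the axiom schemes and $\mathcal{CS}(\mathbf V)$. Templates: a template on distinct propositional letters is a propositional modal formula built with $\neg,\vee,\wedge,\Box$, each letter occurring at most once; disjunctive if its only Boolean connective is $\vee$. Instantiation sets for Henkin formulas $\vec\varphi$: $[\![\mathbf p_i]\!]=\{\varphi_i\}$; $[\![\neg G]\!]=\{\neg\psi:\psi\in[\![G]\!]\}$; $[\![G\vee H]\!]=\{\psi\vee\theta:\psi\in[\![G]\!],\theta\in[\![H]\!]\}$; $[\![G\wedge H]\!]$ likewise with $\wedge$; $[\![\Box G]\!]=\{t{:}_X\psi:\psi\in[\![G]\!], t$ any term, $X$ the set of witness variables in $\psi\}$ (all evaluated at $\vec\varphi$). *)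

(* Defs.v *)
From mathcomp Require Import all_boot.
Set Implicit Arguments. Unset Strict Implicit. Unset Printing Implicit Defensive.

(* Individual variables: (false, n) = basic variable x_n,
                         (true,  n) = witness variable w_n (from V).       *)
Definition var := (bool * nat)%type.
Definition BV (n : nat) : var := (false, n).
Definition WV (n : nat) : var := (true, n).
Definition is_wit (v : var) : bool := v.1.

(* Finite sets of variables, canonically represented as strictly sorted
   lists (so that equal sets are equal as Rocq values). *)
Definition vcode (v : var) : nat := (v.2).*2 + v.1.
Definition vlt (u v : var) : bool := vcode u < vcode v.
Definition vle (u v : var) : bool := vcode u <= vcode v.

Lemma vcode_inj : injective vcode.
Proof.
move=> [b1 n1] [b2 n2]; rewrite /vcode /= => E.
have Ho : odd (n1.*2 + b1) = odd (n2.*2 + b2) by rewrite E.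
rewrite !oddD !odd_double /= in Ho.
have Hb : b1 = b2 by move: Ho; clear E; case: b1; case: b2.
subst b2; move/addIn: E => /(congr1 half); rewrite !doubleK => ->; done.
Qed.

Lemma sort_undup_vlt (s : seq var) : sorted vlt (sort vle (undup s)).
Proof.
have H1 : sorted vle (sort vle (undup s)).
  by apply: sort_sorted => u v; rewrite /vle leq_total.
have H2 : uniq (sort vle (undup s)) by rewrite sort_uniq undup_uniq.
have : sorted ltn (map vcode (sort vle (undup s))).
  rewrite ltn_sorted_uniq_leq (map_inj_uniq vcode_inj) H2 /=.
  by rewrite sorted_map.
by rewrite sorted_map.
Qed.

Definition vset := {s : seq var | sorted vlt s}.
Definition mkvset (s : seq var) : vset := exist (fun l : seq var => is_true (sorted vlt l)) _ (sort_undup_vlt s).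
Definition vmem (v : var) (X : vset) : bool := v \in proj1_sig X.
Definition vset0 : vset := mkvset [::].
Definition vadd (y : var) (X : vset) : vset := mkvset (y :: proj1_sig X).
Definition vmap (f : var -> var) (X : vset) : vset := mkvset (map f (proj1_sig X)).

Inductive term : Type :=
  | TVar of nat
  | TConst of nat
  | TApp of term & term
  | TSum of term & term
  | TBang of term
  | Tb of term
  | TGen of nat & term.    (* gen_x(t), x = x_n basic *)

(* Henkin formulas Fml_J(V).  Quantifiers bind basic variables only.      *)
Inductive form : Type :=
  | FAtom of nat & seq var
  | FBot
  | FImp of form & form
  | FAll of nat & form
  | FJust of term & vset & form.

Definition FNeg (a : form) : form := FImp a FBot.
Definition FOr (a b : form) : form := FImp (FNeg a) b.
Definition FAnd (a b : form) : form := FNeg (FImp a (FNeg b)).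

Fixpoint fv (f : form) : seq var :=
  match f with
  | FAtom _ xs => xs
  | FBot => [::]
  | FImp a b => fv a ++ fv b
  | FAll x a => filter (predC1 (BV x)) (fv a)
  | FJust _ X _ => proj1_sig X
  end.

Fixpoint wvars (f : form) : seq var :=
  match f with
  | FAtom _ xs => filter is_wit xs
  | FBot => [::]
  | FImp a b => wvars a ++ wvars b
  | FAll _ a => wvars a
  | FJust _ X a => filter is_wit (proj1_sig X) ++ wvars a
  end.

Definition basic (f : form) : bool := wvars f == [::].

Fixpoint ssubst (s : var -> var) (f : form) : form :=
  match f with
  | FAtom P xs => FAtom P (map s xs)
  | FBot => FBot
  | FImp a b => FImp (ssubst s a) (ssubst s b)
  | FAll x a => FAll x (ssubst (fun v => if v == BV x then v else s v) a)
  | FJust t X a =>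
      FJust t (vmap s X) (ssubst (fun v => if v \in proj1_sig X then s v else v) a)
  end.

(* replacement of all occurrences of variables that are not bound by a
   quantifier (occurrences inside t:_X A are replaced, whether or not the
   variable is in X); used for CS(V) *)
Fixpoint rsubst (s : var -> var) (f : form) : form :=
  match f with
  | FAtom P xs => FAtom P (map s xs)
  | FBot => FBot
  | FImp a b => FImp (rsubst s a) (rsubst s b)
  | FAll x a => FAll x (rsubst (fun v => if v == BV x then v else s v) a)
  | FJust t X a => FJust t (vmap s X) (rsubst s a)
  end.

Definition sub1 (x y : var) : var -> var := fun v => if v == x then y else v.

(* y is free for x in f (no capture by a quantifier, nor by a subscript) *)
Fixpoint freefor (y x : var) (f : form) : bool :=
  match f with
  | FAtom _ _ | FBot => true
  | FImp a b => freefor y x a && freefor y x b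
  | FAll z a => (x \notin fv (FAll z a)) || ((BV z != y) && freefor y x a)
  | FJust _ X a =>
      (x \notin proj1_sig X) || (freefor y x a && ((y \in fv a) ==> (y \in proj1_sig X)))
  end.

Fixpoint tval (v : form -> bool) (f : form) : bool :=
  match f with
  | FBot => false
  | FImp a b => tval v a ==> tval v b
  | _ => v f
  end.
Definition taut (f : form) : Prop := forall v, tval v f.

Inductive is_axiom : form -> Prop :=
  | AxTaut f : taut f -> is_axiom f
  | AxInst x y a : freefor y (BV x) a ->
      is_axiom (FImp (FAll x a) (ssubst (sub1 (BV x) y) a))
  | AxAllImp x a b : BV x \notin fv a ->
      is_axiom (FImp (FAll x (FImp a b)) (FImp a (FAll x b)))
  | AxA2 t X y a : ~~ vmem y X -> y \notin fv a ->
      is_axiom (FImp (FJust t (vadd y X) a) (FJust t X a))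
  | AxA3 t X y a : ~~ vmem y X ->
      is_axiom (FImp (FJust t X a) (FJust t (vadd y X) a))
  | AxB1 t X a : is_axiom (FImp (FJust t X a) a)
  | AxB2 t s X a b :
      is_axiom (FImp (FJust t X (FImp a b)) (FImp (FJust s X a) (FJust (TApp t s) X b)))
  | AxB3l t s X a : is_axiom (FImp (FJust t X a) (FJust (TSum t s) X a))
  | AxB3r t s X a : is_axiom (FImp (FJust s X a) (FJust (TSum t s) X a))
  | AxB4 t X a : is_axiom (FImp (FJust t X a) (FJust (TBang t) X (FJust t X a)))
  | AxB5 t X x a : ~~ vmem (BV x) X ->
      is_axiom (FImp (FJust t X a) (FJust (TGen x t) X (FAll x a)))
  | AxBb t X y a : ~~ vmem (BV y) X ->
      is_axiom (FImp (FAll y (FJust t (vadd (BV y) X) a)) (FJust (Tb t) X (FAll y a))).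

(* Constant specifications: CS c A  means  c:A (= c:_{} A) is in CS. *)
Definition const_spec := nat -> form -> Prop.

Definition is_CS (CS : const_spec) : Prop :=
  forall c A, CS c A -> basic A /\ is_axiom A.

Definition axiomatically_appropriate (CS : const_spec) : Prop :=
  forall A, basic A -> is_axiom A -> exists c, CS c A.

Definition rvar (r : nat -> nat) (v : var) : var := if v.1 then v else BV (r v.2).
Fixpoint trename (r : nat -> nat) (t : term) : term :=
  match t with
  | TVar i => TVar i
  | TConst c => TConst c
  | TApp a b => TApp (trename r a) (trename r b)
  | TSum a b => TSum (trename r a) (trename r b)
  | TBang a => TBang (trename r a)
  | Tb a => Tb (trename r a)
  | TGen x a => TGen (r x) (trename r a)
  end.
Fixpoint rename (r : nat -> nat) (f : form) : form :=
  match f with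
  | FAtom P xs => FAtom P (map (rvar r) xs)
  | FBot => FBot
  | FImp a b => FImp (rename r a) (rename r b)
  | FAll x a => FAll (r x) (rename r a)
  | FJust t X a => FJust (trename r t) (vmap (rvar r) X) (rename r a)
  end.

Definition variant_closed (CS : const_spec) : Prop :=
  forall c A (r : nat -> nat), injective r -> CS c A -> CS c (rename r A).

Definition CSV (CS : const_spec) : const_spec := fun c B =>
  exists A (s : var -> var),
    CS c A /\
    (forall v, s v = v \/ (~~ is_wit v /\ is_wit (s v))) /\
    (forall u v, s u <> u -> s v <> v -> s u = s v -> u = v) /\
    B = rsubst s A.

Inductive prov (CS : const_spec) : form -> Prop :=
  | PAx A : is_axiom A -> prov CS A
  | PCS c A : CSV CS c A -> prov CS (FJust (TConst c) vset0 A)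
  | PMP a b : prov CS (FImp a b) -> prov CS a -> prov CS b
  | PGen x a : prov CS a -> prov CS (FAll x a).

(* Templates: letters Some i = p_i, None = q. *)
Inductive tmpl : Type :=
  | TmL of option nat
  | TmNeg of tmpl
  | TmOr of tmpl & tmpl
  | TmAnd of tmpl & tmpl
  | TmBox of tmpl.

Fixpoint tletters (F : tmpl) : seq (option nat) :=
  match F with
  | TmL l => [:: l]
  | TmNeg G | TmBox G => tletters G
  | TmOr G H | TmAnd G H => tletters G ++ tletters H
  end.

Definition is_template (F : tmpl) : bool := uniq (tletters F).

Fixpoint disjunctive (F : tmpl) : bool :=
  match F with
  | TmL _ => true
  | TmOr G H => disjunctive G && disjunctive H
  | TmBox G => disjunctive G
  | _ => false
  end.

Fixpoint inst (val : option nat -> form) (F : tmpl) : form -> Prop :=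
  match F with
  | TmL l => fun f => f = val l
  | TmNeg G => fun f => exists a, inst val G a /\ f = FNeg a
  | TmOr G H => fun f => exists a b, inst val G a /\ inst val H b /\ f = FOr a b
  | TmAnd G H => fun f => exists a b, inst val G a /\ inst val H b /\ f = FAnd a b
  | TmBox G => fun f => exists t a, inst val G a /\ f = FJust t (mkvset (wvars a)) a
  end.

Definition letval (phis : seq form) (q : form) (l : option nat) : form :=
  match l with Some i => nth FBot phis i | None => q end.

(* Main.v *)
Require Import Defs.
From mathcomp Require Import all_boot.
Set Implicit Arguments. Unset Strict Implicit. Unset Printing Implicit Defensive.

Lemma vlt_trans : transitive vlt.
Proof. by move=> a b c; rewrite /vlt; apply: ltn_trans. Qed.
Lemma vlt_irr : irreflexive vlt.
Proof. by move=> a; rewrite /vlt ltnn. Qed.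

Lemma vset_ext (X Y : vset) : proj1_sig X = proj1_sig Y -> X = Y.
Proof. case: X => x px; case: Y => y py /= E; subst; f_equal; apply: bool_irrelevance. Qed.

Lemma mem_mkvset l v : (v \in proj1_sig (mkvset l)) = (v \in l).
Proof. by rewrite /mkvset /= mem_sort mem_undup. Qed.

Lemma mkvset_eqi l1 l2 : l1 =i l2 -> mkvset l1 = mkvset l2.
Proof.
move=> E; apply: vset_ext; apply: (irr_sorted_eq vlt_trans vlt_irr);
  try exact: sort_undup_vlt.
by move=> v; rewrite !mem_mkvset E.
Qed.

Lemma mkvset_id X : mkvset (proj1_sig X) = X.
Proof.
apply: vset_ext; apply: (irr_sorted_eq vlt_trans vlt_irr);
  [exact: sort_undup_vlt| exact: (proj2_sig X)|].
by move=> v; rewrite !mem_mkvset.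
Qed.

Lemma ssubst_idf a : forall f, f =1 id -> ssubst f a = a.
Proof.
elim: a => [P xs||a IHa b IHb|x a IH|t X a IH] f Hf //=.
- by rewrite (eq_map Hf) map_id.
- by rewrite IHa // IHb.
- by rewrite IH // => v; case: eqP => // _; apply: Hf.
- rewrite IH; last by move=> v; case: ifP => // _; apply: Hf.
  by rewrite /vmap (eq_map Hf) map_id mkvset_id.
Qed.

Lemma ssubst_id z a : ssubst (sub1 z z) a = a.
Proof. by apply: ssubst_idf => v; rewrite /sub1; case: eqP => [->|]. Qed.

Lemma freefor_refl z a : freefor z z a.
Proof.
elim: a => [P xs||a IHa b IHb|x a IH|t X a IH] //=.
- by rewrite IHa IHb.
- case: (BV x =P z) => [<-|_]; last by rewrite IH orbT.
  by rewrite mem_filter /= eqxx.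
- by case: (z \in proj1_sig X); rewrite ?orbT // IH implybT orbT.
Qed.

Lemma axInstId x a : is_axiom (FImp (FAll x a) a).
Proof.
have := AxInst (freefor_refl (BV x) a); by rewrite ssubst_id.
Qed.

Fixpoint allv (f : form) : seq var :=
  match f with
  | FAtom _ xs => xs
  | FBot => [::]
  | FImp a b => allv a ++ allv b
  | FAll x a => BV x :: allv a
  | FJust _ X a => proj1_sig X ++ allv a
  end.
Definition bnd N a := forall v, v \in allv a -> v.2 < N.
Definition rr (N : nat) (v : var) : var := if is_wit v then BV (N + v.2) else v.
Definition ss (N : nat) (v : var) : var :=
  if ~~ is_wit v && (N <= v.2) then WV (v.2 - N) else v.

Lemma rsubst_ext a : forall f g, f =1 g -> rsubst f a = rsubst g a.
Proof.
elim: a => [P xs||a IHa b IHb|x a IH|t X a IH] f g E //=.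
- by rewrite (eq_map E).
- by rewrite (IHa _ _ E) (IHb _ _ E).
- by rewrite (IH _ (fun v => if v == BV x then v else g v)) // => v; rewrite E.
- by rewrite /vmap (eq_map E) (IH _ _ E).
Qed.

Lemma mem_vmap f X v : (v \in proj1_sig (vmap f X)) = (v \in map f (proj1_sig X)).
Proof. by rewrite mem_mkvset. Qed.

Lemma rr_upd N x : (fun v => if v == BV x then v else rr N v) =1 rr N.
Proof. by move=> v; case: eqP => // ->. Qed.

Lemma ss_rr N v : v.2 < N -> ss N (rr N v) = v.
Proof.
case: v => [[] n] /= H; rewrite /rr /ss /=.
- by rewrite leq_addr /= addKn.
- by rewrite leqNgt H.
Qed.

Lemma ss_upd N x : x < N -> (fun v => if v == BV x then v else ss N v) =1 ss N.
Proof. move=> H v; case: eqP => // ->; by rewrite /ss /= leqNgt H. Qed.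

Lemma bnd_sub N a b : bnd N b -> {subset allv a <= allv b} -> bnd N a.
Proof. by move=> H S v /S /H. Qed.

Lemma ss_back N a : bnd N a -> rsubst (ss N) (rsubst (rr N) a) = a.
Proof.
elim: a => [P xs||a IHa b IHb|x a IH|t X a IH] H //=.
- rewrite -map_comp map_id_in // => v Hv /=; exact: ss_rr (H _ Hv).
- rewrite IHa ?IHb //; move=> v Hv; apply: H; by rewrite /= mem_cat Hv ?orbT.
- have Hx : x < N by apply: (H (BV x)); rewrite inE eqxx.
  rewrite (rsubst_ext _ (rr_upd N x)) (rsubst_ext _ (ss_upd Hx)) IH //.
  by move=> v Hv; apply: H; rewrite /= inE Hv orbT.
- rewrite IH; last by move=> v Hv; apply: H; rewrite /= mem_cat Hv orbT.
  congr FJust; rewrite -[RHS]mkvset_id; apply: mkvset_eqi => v.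
  apply/mapP/idP => [[u Hu ->]|Hv].
  + move: Hu; rewrite mem_vmap => /mapP [w Hw ->] /=; rewrite ss_rr //.
    by apply: H; rewrite mem_cat Hw.
  + exists (rr N v); last by rewrite ss_rr //; apply: H; rewrite mem_cat Hv.
    by rewrite mem_vmap map_f.
Qed.

Lemma wvars_rsubst a : forall f, (forall v, ~~ is_wit (f v)) -> wvars (rsubst f a) = [::].
Proof.
elim: a => [P xs||a IHa b IHb|x a IH|t X a IH] f Hf //=.
- by apply/eqP; rewrite -[_ == _]negbK -has_filter; apply/hasP => [[v /mapP [u _ ->]]]; rewrite (negbTE (Hf u)).
- by rewrite IHa // IHb.
- by apply: IH => v; case: eqP => // ->.
- rewrite IH // cats0; apply/eqP; rewrite -[_ == _]negbK -has_filter.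
  by apply/hasP => [[v]]; rewrite mem_vmap => /mapP [u _ ->]; rewrite (negbTE (Hf u)).
Qed.

Lemma fv_rsubst a : forall f v, v \in fv (rsubst f a) -> exists2 u, u \in fv a & f u = v.
Proof.
elim: a => [P xs||a IHa b IHb|x a IH|t X a IH] f v //=.
- by move/mapP => [u Hu ->]; exists u.
- rewrite mem_cat => /orP [/IHa|/IHb] [u Hu E]; exists u => //; by rewrite mem_cat Hu ?orbT.
- rewrite mem_filter => /andP [/= Hv /IH [u Hu]].
  case: eqP => [->|Hne] E; first by rewrite E eqxx in Hv.
  by exists u => //; rewrite mem_filter /=; apply/andP; split => //; apply/eqP.
- by rewrite mem_vmap => /mapP [u Hu ->]; exists u.
Qed.

Lemma tval_rsubst w f a : Defs.tval w (rsubst f a) = Defs.tval (fun g => w (rsubst f g)) a.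
Proof. by elim: a f => //= a IHa b IHb f; rewrite IHa IHb. Qed.

Lemma rr_inj N u v : u.2 < N -> v.2 < N -> rr N u = rr N v -> u = v.
Proof.
case: u => [[] m]; case: v => [[] n] /=; rewrite /rr /= => Hm Hn; try by [].
- by case=> /addnI ->.
- by case=> E; move: Hn; rewrite -E ltnNge leq_addr.
- by case=> E; move: Hm; rewrite E ltnNge leq_addr.
Qed.

Lemma rr_basic N v : ~~ is_wit (rr N v).
Proof. by case: v => [[] n]. Qed.

Inductive good : form -> Prop :=
| GTaut f : taut f -> good f
| GInst x a : good (FImp (FAll x a) a)
| GAllImp x a b : BV x \notin fv a -> good (FImp (FAll x (FImp a b)) (FImp a (FAll x b)))
| GB5 t X x a : ~~ vmem (BV x) X ->
    good (FImp (FJust t X a) (FJust (TGen x t) X (FAll x a)))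
| GB2 t s X a b :
    good (FImp (FJust t X (FImp a b)) (FImp (FJust s X a) (FJust (TApp t s) X b)))
| GA3 t X y a : ~~ vmem y X -> good (FImp (FJust t X a) (FJust t (vadd y X) a))
| GB4 t X a : good (FImp (FJust t X a) (FJust (TBang t) X (FJust t X a))).

Lemma good_axiom A : good A -> is_axiom A.
Proof.
case=> *; first (by apply: AxTaut); first (by apply: axInstId).
- by apply: AxAllImp.
- by apply: AxB5.
- by apply: AxB2.
- by apply: AxA3.
- by apply: AxB4.
Qed.

Lemma vmap_vadd f y X : vmap f (vadd y X) = vadd (f y) (vmap f X).
Proof.
apply: mkvset_eqi => v; rewrite inE.
apply/mapP/idP => [[u Hu ->]|].
- move: Hu; rewrite mem_mkvset inE => /orP [/eqP ->|Hu]; first by rewrite eqxx.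
  by rewrite mem_vmap map_f ?orbT.
- case/orP => [/eqP ->|]; first by exists y => //; rewrite mem_mkvset inE eqxx.
  rewrite mem_vmap => /mapP [u Hu ->]; exists u => //; by rewrite mem_mkvset inE Hu orbT.
Qed.

Lemma rr_eq_BV N u x : x < N -> rr N u = BV x -> u = BV x.
Proof.
case: u => [[] n]; rewrite /rr /= => // Hx [E].
by move: Hx; rewrite -E ltnNge leq_addr.
Qed.

Lemma good_rr N A : good A -> bnd N A -> good (rsubst (rr N) A).
Proof.
case.
- move=> f Hf _; apply: GTaut => w; rewrite tval_rsubst; exact: Hf.
- move=> x a _ /=; rewrite (rsubst_ext _ (rr_upd N x)); exact: GInst.
- move=> x a b Hx H /=; rewrite !(rsubst_ext _ (rr_upd N x)); apply: GAllImp.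
  have HxN : x < N by apply: (H (BV x)); rewrite /= inE eqxx.
  apply/negP => /fv_rsubst [u Hu /(rr_eq_BV HxN) E].
  by move: Hx; rewrite -E Hu.
- move=> t X x a Hx H /=; rewrite !(rsubst_ext _ (rr_upd N x)); apply: GB5.
  have HxN : x < N by apply: (H (BV x)); rewrite /= !mem_cat inE eqxx !orbT.
  apply/negP; rewrite /vmem mem_vmap => /mapP [u Hu /esym /(rr_eq_BV HxN) E].
  by move: Hx; rewrite /vmem -E Hu.
- move=> *; exact: GB2.
- move=> t X y a Hy H /=; rewrite vmap_vadd; apply: GA3.
  apply/negP; rewrite /vmem mem_vmap => /mapP [u Hu E].
  have := rr_inj _ _ E.
  rewrite (H y); last by rewrite /= !mem_cat mem_sort; case: (boolP (y \in sval X)) => Hm; rewrite ?Hm // inE eqxx orbT.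
  rewrite (H u); last by rewrite /= !mem_cat Hu.
  by move=> /(_ isT isT) Eu; move: Hy; rewrite /vmem Eu Hu.
- move=> *; exact: GB4.
Qed.

Definition Nof a := (foldr maxn 0 (map snd (allv a))).+1.

Lemma bnd_Nof a : bnd (Nof a) a.
Proof.
rewrite /bnd /Nof => v; elim: (allv a) => //= u l IH; rewrite inE => /orP [/eqP ->|/IH].
- by rewrite ltnS leq_maxl.
- by rewrite !ltnS => H; apply: (leq_trans H); rewrite leq_maxr.
Qed.

Lemma good_csv CS A : axiomatically_appropriate CS -> good A -> exists c, CSV CS c A.
Proof.
move=> Haa HA; set N := Nof A.
have Hb : bnd N A by apply: bnd_Nof.
have [c Hc] : exists c, CS c (rsubst (rr N) A).
  apply: Haa; first by rewrite /basic wvars_rsubst // => v; apply: rr_basic.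
  by apply: good_axiom; apply: good_rr.
exists c, (rsubst (rr N) A), (ss N); split => //; split; last split.
- case=> [[] n]; rewrite /ss /=; first by left.
  by case: leqP => _ /=; [left|right].
- move=> [bu m] [bv n]; rewrite /ss /=.
  case: bu; case: bv => //=; try (by move=> H; case: H);
    try (by move=> _ H; case: H).
  case: leqP => Hm; case: leqP => Hn //= _ _; try by case.
  by case=> E; congr pair; rewrite -(subnK Hm) -(subnK Hn) E.
- by rewrite ss_back.
Qed.

Inductive pv (CS : const_spec) : form -> Prop :=
| PvAx A : good A -> pv CS A
| PvCS c A : CSV CS c A -> pv CS (FJust (TConst c) vset0 A)
| PvMP a b : pv CS (FImp a b) -> pv CS a -> pv CS b
| PvGen x a : pv CS a -> pv CS (FAll x a).

Lemma pv_prov CS A : pv CS A -> prov CS A.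
Proof.
elim=> {A}.
- by move=> A /good_axiom; apply: PAx.
- by move=> c A H; apply: PCS.
- by move=> a b _ H1 _ H2; apply: PMP H1 H2.
- by move=> x a _ H; apply: PGen.
Qed.

Lemma raise CS t A : pv CS (FJust t vset0 A) -> forall Z, pv CS (FJust t Z A).
Proof.
move=> H Z; rewrite -(mkvset_id Z); elim: (sval Z) => [//|a l IH].
case: (boolP (vmem a (mkvset l))) => Ha.
- rewrite (@mkvset_eqi (a :: l) l) // => v; rewrite inE.
  case: eqP => // ->; move: Ha; by rewrite /vmem mem_mkvset => ->.
- have -> : mkvset (a :: l) = vadd a (mkvset l).
    by apply: mkvset_eqi => v; rewrite !inE mem_mkvset.
  exact: PvMP (PvAx _ (GA3 t A Ha)) IH.
Qed.

Lemma pv_lift CS A : axiomatically_appropriate CS -> pv CS A ->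
  forall Z, (forall v, v \in sval Z -> is_wit v) -> exists k, pv CS (FJust k Z A).
Proof.
move=> Haa; elim=> {A}.
- move=> A HA Z _; have [c Hc] := good_csv Haa HA.
  by exists (TConst c); apply: raise; apply: PvCS.
- move=> c A Hc Z _; exists (TBang (TConst c)); apply: raise.
  exact: PvMP (PvAx _ (GB4 _ _ _)) (PvCS Hc).
- move=> a b _ IH1 _ IH2 Z HZ.
  have [k1 H1] := IH1 Z HZ; have [k2 H2] := IH2 Z HZ.
  exists (TApp k1 k2); exact: PvMP (PvMP (PvAx _ (GB2 _ _ _ _ _)) H1) H2.
- move=> x a _ IH Z HZ; have [k Hk] := IH Z HZ.
  have Hx : ~~ vmem (BV x) Z by apply/negP => /HZ.
  exists (TGen x k); exact: PvMP (PvAx _ (GB5 k a Hx)) Hk.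
Qed.

Ltac tt := let w := fresh "w" in move=> w /=; repeat match goal with |- context [Defs.tval ?w ?f] => case: (Defs.tval w f) end.

Lemma pv_mp1 CS A B : taut (FImp A B) -> pv CS A -> pv CS B.
Proof. by move=> T HA; apply: PvMP HA; apply: PvAx; apply: GTaut. Qed.
Lemma pv_mp2 CS A B C : taut (FImp A (FImp B C)) -> pv CS A -> pv CS B -> pv CS C.
Proof. by move=> T HA HB; apply: PvMP HB; apply: pv_mp1 HA. Qed.
Lemma pv_mp3 CS A B C D : taut (FImp A (FImp B (FImp C D))) ->
  pv CS A -> pv CS B -> pv CS C -> pv CS D.
Proof. by move=> T HA HB HC; apply: PvMP HC; apply: pv_mp2 HA HB. Qed.

Lemma pv_K CS y A B : pv CS (FImp (FAll y (FImp A B)) (FImp (FAll y A) (FAll y B))).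
Proof.
have T1 : forall P Q, taut (FImp (FImp P (FImp A B)) (FImp (FImp Q A) (FImp (FAnd P Q) B))).
  by move=> P Q; tt.
have h3 := pv_mp2 (T1 _ _) (PvAx CS (GInst y (FImp A B))) (PvAx CS (GInst y A)).
have h5 : pv CS (FImp (FAll y (FImp (FAnd (FAll y (FImp A B)) (FAll y A)) B))
                (FImp (FAnd (FAll y (FImp A B)) (FAll y A)) (FAll y B))).
  apply: PvAx; apply: GAllImp.
  by rewrite /= !mem_cat !mem_filter /= eqxx.
have h6 := PvMP h5 (PvGen y h3).
apply: pv_mp1 h6.
have T2 : forall P Q R, taut (FImp (FImp (FAnd P Q) R) (FImp P (FImp Q R))) by move=> P Q R; tt.
exact: T2.
Qed.

Lemma inst_indep phis q1 q2 F f : None \notin tletters F ->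
  inst (letval phis q1) F f -> inst (letval phis q2) F f.
Proof.
elim: F f => [l|G IH|G IHG H IHH|G IHG H IHH|G IH] f /= Hn.
- by case: l Hn => // i _.
- by case=> a [Ha ->]; exists a; split => //; apply: IH.
- move: Hn; rewrite mem_cat negb_or => /andP [HG HH].
  by case=> a [b [Ha [Hb ->]]]; exists a, b; split; [apply: IHG|split; [apply: IHH|]].
- move: Hn; rewrite mem_cat negb_or => /andP [HG HH].
  by case=> a [b [Ha [Hb ->]]]; exists a, b; split; [apply: IHG|split; [apply: IHH|]].
- by case=> t [a [Ha ->]]; exists t, a; split => //; apply: IH.
Qed.

Lemma wvars_wit a v : v \in wvars a -> is_wit v.
Proof.
elim: a => [P xs||a IHa b IHb|x a IH|t X a IH] //=.
- by rewrite mem_filter => /andP [].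
- by rewrite mem_cat => /orP [/IHa|/IHb].
- by rewrite mem_cat mem_filter => /orP [/andP []|/IH].
Qed.

Lemma fv_noq phis q y F f : None \notin tletters F ->
  (forall i, BV y \notin fv (nth FBot phis i)) ->
  inst (letval phis q) F f -> BV y \notin fv f.
Proof.
move=> Hn Hy; elim: F f Hn => [l|G IH|G IHG H IHH|G IHG H IHH|G IH] f /= Hn.
- by case: l Hn => // i _ ->; apply: Hy.
- by case=> a [Ha ->]; rewrite /= cats0; apply: IH.
- move: Hn; rewrite mem_cat negb_or => /andP [HG HH].
  case=> a [b [Ha [Hb ->]]]; have := IHG a HG Ha; have := IHH b HH Hb.
  by rewrite /= !mem_cat /= => /negbTE -> /negbTE ->.
- move: Hn; rewrite mem_cat negb_or => /andP [HG HH].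
  case=> a [b [Ha [Hb ->]]]; have := IHG a HG Ha; have := IHH b HH Hb.
  by rewrite /= !mem_cat /= => /negbTE -> /negbTE ->.
- case=> t [a [Ha ->]]; rewrite /= mem_mkvset; apply/negP => /wvars_wit //.
Qed.

Lemma main_ind CS y phi phis : axiomatically_appropriate CS ->
  (forall i, BV y \notin fv (nth FBot phis i)) -> forall F,
  is_template F -> disjunctive F -> forall psi, inst (letval phis phi) F psi ->
  exists theta, inst (letval phis (FAll y phi)) F theta /\
    pv CS (FImp (FAll y psi) theta) /\ wvars theta =i wvars psi.
Proof.
move=> Haa Hy; elim => [l|G IH|G IHG H IHH|G IHG H IHH|G IH] //= HF Hd psi.
- move: HF; case: l => [i|] _ /= ->.
  + by exists (nth FBot phis i); split => //; split => //; apply: PvAx; apply: GInst.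
  + exists (FAll y phi); split => //; split => //.
    by apply: PvAx; apply: GTaut => w /=; rewrite implybb.
- move: HF Hd; rewrite /is_template /= cat_uniq => /and3P [UG Hdj UH] /andP [DG DH].
  case=> a [b [Ha [Hb ->]]].
  case: (boolP (None \in tletters G)) => HqG.
  + have HqH : None \notin tletters H.
      by apply/negP => HqH; move/hasPn: Hdj => /(_ None HqH); rewrite HqG.
    have [t1 [It1 [Pt1 Wt1]]] := IHG UG DG a Ha.
    have Hyb := fv_noq HqH Hy Hb.
    exists (FOr t1 b); split.
      by exists t1, b; split => //; split => //; apply: inst_indep Hb.
    split; last by move=> v; rewrite /= !mem_cat Wt1.
    have T1 : taut (FImp (FOr a b) (FImp (FNeg b) a)) by tt.
    have hK := PvMP (pv_K CS y (FOr a b) (FImp (FNeg b) a)) (PvGen y (PvAx CS (GTaut T1))).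
    have h2 : pv CS (FImp (FAll y (FImp (FNeg b) a)) (FImp (FNeg b) (FAll y a))).
      by apply: PvAx; apply: GAllImp; rewrite /= cats0.
    apply: (pv_mp3 _ hK h2 Pt1).
    have T : forall P M R T, taut (FImp (FImp P M) (FImp (FImp M (FImp (FNeg b) R))
               (FImp (FImp R T) (FImp P (FImp (FNeg T) b))))) by move=> *; tt.
    exact: T.
  + have [t2 [It2 [Pt2 Wt2]]] := IHH UH DH b Hb.
    have Hya := fv_noq HqG Hy Ha.
    exists (FOr a t2); split.
      by exists a, t2; split; [apply: inst_indep Ha|split].
    split; last by move=> v; rewrite /= !mem_cat Wt2.
    have h2 : pv CS (FImp (FAll y (FImp (FNeg a) b)) (FImp (FNeg a) (FAll y b))).
      by apply: PvAx; apply: GAllImp; rewrite /= cats0.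
    apply: (pv_mp2 _ h2 Pt2).
    have T : forall P Q R S, taut (FImp (FImp P (FImp Q R)) (FImp (FImp R S) (FImp P (FImp Q S))))
      by move=> *; tt.
    exact: T.
- case=> t [a [Ha ->]].
  have [t' [It' [Pt' Wt']]] := IH HF Hd a Ha.
  set X := mkvset (wvars a).
  have HX : forall v, v \in sval X -> is_wit v by move=> v; rewrite mem_mkvset => /wvars_wit.
  have [k Hk] := pv_lift Haa Pt' HX.
  have EX : mkvset (wvars t') = X by apply: mkvset_eqi.
  exists (FJust (TApp k (TGen y t)) X t'); split.
    by exists (TApp k (TGen y t)), t'; rewrite EX.
  split; last by move=> v; rewrite /= !mem_cat Wt'.
  have h1 := PvAx CS (GInst y (FJust t X a)).
  have Hv : ~~ vmem (BV y) X by apply/negP => /HX.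
  have h2 := PvAx CS (GB5 t a Hv).
  have h3 := PvMP (PvAx CS (GB2 k (TGen y t) X (FAll y a) t')) Hk.
  apply: (pv_mp3 _ h1 h2 h3).
  have T : forall P Q R S, taut (FImp (FImp P Q) (FImp (FImp Q R) (FImp (FImp R S) (FImp P S))))
    by move=> *; tt.
  exact: T.
Qed.

Theorem mainTheorem13 (CS : const_spec)
  (HCS : is_CS CS) (Hvc : variant_closed CS) (Haa : axiomatically_appropriate CS)
  (F : tmpl) (HF : is_template F) (Hdisj : disjunctive F)
  (y : nat) (phi : form) (phis : seq form)
  (Hlet : forall i, Some i \in tletters F -> i < size phis)
  (Hy : forall i, i < size phis -> BV y \notin fv (nth FBot phis i)) :
  forall psi, inst (letval phis phi) F psi ->
    exists theta, inst (letval phis (FAll y phi)) F theta /\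
                  prov CS (FImp (FAll y psi) theta).
Proof.
move=> psi Hpsi.
have Hy' : forall i, BV y \notin fv (nth FBot phis i).
  move=> i; case: (ltnP i (size phis)) => Hi; first exact: Hy.
  by rewrite nth_default.
have [theta [H1 [H2 _]]] := main_ind Haa Hy' HF Hdisj Hpsi.
by exists theta; split => //; apply: pv_prov.
Qed.
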